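(* Let $S$ be a $*$-regular semigroup, viewed as a DRC-semigroup with $D(a)=aa^\dagger$ and $R(a)=a^\dagger a$. Then for any $a\in S$: (i) $\vartheta_a$ and $\vartheta'_a$ are bijections, with $\vartheta_{a^\dagger}=\vartheta_a^{-1}$ and $\vartheta'_{a^\dagger}=(\vartheta'_a)^{-1}$; (ii) $\vartheta_{a^*}=\vartheta'_a$ and $\vartheta'_{a^*}=\vartheta_a$; (iii) $\Theta_{a^*}=\Delta_a$ and $\Delta_{a^*}=\Theta_a$.
   Context: A $*$-regular semigroup is a semigroup $S$ with an involution $a\mapsto a^*$ ($a^{**}=a$, $(ab)^*=b^*a^*$) such that each $a\in S$ has a (unique) element $a^\dagger$ (Moore–Penrose inverse) satisfying $aa^\dagger a=a$, $a^\dagger aa^\dagger=a^\dagger$, $(aa^\dagger)^*=aa^\dagger$, $(a^\dagger a)^*=a^\dagger a$. With $D(a)=aa^\dagger$, $R(a)=a^\dagger a$, $S$ is a DRC-semigroup. Let $P=\{D(a):a\in S\}$, ordered by $p\le q\iff p=pq=qp$, and $t^\downarrow=\{s\in P:s\le t\}$. For $a\in S$ define (maps written on the right) $\vartheta_a:D(a)^\downarrow\to R(a)^\downarrow$, $p\vartheta_a=R(pa)$; $\vartheta'_a:R(a)^\downarrow\to D(a)^\downarrow$, $q\vartheta'_a=D(aq)$; $\Theta_a,\Delta_a:P\to P$, $p\Theta_a=R(pa)$, $p\Delta_a=D(ap)$. *)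

(* Defs.v *)
Set Implicit Arguments.

(* Since the Moore-Penrose inverse
   is unique, we record it as a function [mp] satisfying the four MP equations. *)
Record StarRegSemigroup := {
  car :> Type;
  mul : car -> car -> car;
  star : car -> car;
  mp : car -> car;
  mulA : forall a b c, mul a (mul b c) = mul (mul a b) c;
  starK : forall a, star (star a) = a;
  starM : forall a b, star (mul a b) = mul (star b) (star a);
  mp1 : forall a, mul (mul a (mp a)) a = a;
  mp2 : forall a, mul (mul (mp a) a) (mp a) = mp a;
  mp3 : forall a, star (mul a (mp a)) = mul a (mp a);
  mp4 : forall a, star (mul (mp a) a) = mul (mp a) a
}.

Arguments mul {s} _ _.
Arguments star {s} _.
Arguments mp {s} _.

Section Defs.
Variable S : StarRegSemigroup.

Definition Dop (a : S) : S := mul a (mp a).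
Definition Rop (a : S) : S := mul (mp a) a.

Definition inP (p : S) : Prop := exists a : S, p = Dop a.

Definition leP (p q : S) : Prop := p = mul p q /\ p = mul q p.

Definition down (t : S) (s : S) : Prop := inP s /\ leP s t.

(* the maps, written as functions on S, with their intended domains *)
Definition theta (a : S) (p : S) : S := Rop (mul p a).    (* on D(a)^down *)
Definition theta' (a : S) (q : S) : S := Dop (mul a q).   (* on R(a)^down *)
Definition Theta (a : S) (p : S) : S := Rop (mul p a).    (* on P *)
Definition Delta (a : S) (p : S) : S := Dop (mul a p).    (* on P *)

Definition bij_on (A B : S -> Prop) (f : S -> S) : Prop :=
  (forall x, A x -> B (f x)) /\
  (forall x y, A x -> A y -> f x = f y -> x = y) /\
  (forall y, B y -> exists x, A x /\ f x = y).

Definition map_eq (A1 B1 : S -> Prop) (f : S -> S)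
                  (A2 B2 : S -> Prop) (g : S -> S) : Prop :=
  (forall x, A1 x <-> A2 x) /\ (forall x, B1 x <-> B2 x) /\
  (forall x, A1 x -> f x = g x).

Definition map_inv (A B : S -> Prop) (f : S -> S)
                   (A' B' : S -> Prop) (g : S -> S) : Prop :=
  (forall x, A' x <-> B x) /\ (forall x, B' x <-> A x) /\
  (forall x, A x -> g (f x) = x) /\ (forall y, B y -> f (g y) = y).

End Defs.

Arguments Dop {S} _.
Arguments Rop {S} _.
Arguments inP {S} _.
Arguments leP {S} _ _.
Arguments down {S} _ _.
Arguments theta {S} _ _.
Arguments theta' {S} _ _.
Arguments Theta {S} _ _.
Arguments Delta {S} _ _.
Arguments bij_on {S} _ _ _.
Arguments map_eq {S} _ _ _ _ _ _.
Arguments map_inv {S} _ _ _ _ _ _.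

(* Main.v *)
Require Import Defs.
From Stdlib Require Import Setoid.
Local Infix "**" := mul (at level 40, left associativity).

Lemma mp_uniq (S : StarRegSemigroup) (a x : S) :
  a ** x ** a = a -> x ** a ** x = x -> star (a ** x) = a ** x -> star (x ** a) = x ** a ->
  x = mp a.
Proof.
  intros H1 H2 H3 H4.
  assert (Ea : star a = star a ** (a ** mp a)).
  { rewrite <- (mp3 S a). rewrite <- starM. now rewrite mp1. }
  assert (Ea' : star a = x ** a ** star a).
  { rewrite <- H4. rewrite <- starM. now rewrite mulA, H1. }
  assert (Ex : x = x ** a ** mp a).
  { transitivity (x ** star x ** star a).
    - rewrite <- mulA, <- starM, H3, mulA. now rewrite H2.
    - rewrite Ea, !mulA. rewrite <- (mulA _ x), <- starM, H3, mulA, H2. reflexivity. }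
  assert (Eb : mp a = x ** a ** mp a).
  { transitivity (star a ** star (mp a) ** mp a).
    - rewrite <- starM. rewrite mp4. now rewrite mp2.
    - rewrite Ea'. rewrite <- (mulA _ (x ** a) (star a) (star (mp a))).
      rewrite <- starM, mp4, <- mulA, mp2. reflexivity. }
  rewrite Ex. now rewrite <- Eb.
Qed.

Lemma mpK (S : StarRegSemigroup) (a : S) : mp (mp a) = a.
Proof. symmetry. apply mp_uniq; [apply mp2 | apply mp1 | apply mp4 | apply mp3]. Qed.

Lemma mp_star (S : StarRegSemigroup) (a : S) : mp (star a) = star (mp a).
Proof.
  symmetry. apply mp_uniq.
  - rewrite <- !starM, mulA, mp1. reflexivity.
  - rewrite <- !starM, mulA, mp2. reflexivity.
  - rewrite <- starM, starK, mp4. reflexivity.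
  - rewrite <- starM, starK, mp3. reflexivity.
Qed.

Lemma mp_proj (S : StarRegSemigroup) (e : S) : star e = e -> e ** e = e -> mp e = e.
Proof.
  intros H1 H2. symmetry. apply mp_uniq; rewrite ?H2; auto.
Qed.

Lemma D_star (S : StarRegSemigroup) (a : S) : Dop (star a) = Rop a.
Proof. unfold Dop, Rop. rewrite mp_star, <- starM. apply mp4. Qed.

Lemma R_star (S : StarRegSemigroup) (a : S) : Rop (star a) = Dop a.
Proof. unfold Dop, Rop. rewrite mp_star, <- starM. apply mp3. Qed.

Lemma D_mp (S : StarRegSemigroup) (a : S) : Dop (mp a) = Rop a.
Proof. unfold Dop, Rop. now rewrite mpK. Qed.

Lemma R_mp (S : StarRegSemigroup) (a : S) : Rop (mp a) = Dop a.
Proof. unfold Dop, Rop. now rewrite mpK. Qed.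

Lemma D_proj (S : StarRegSemigroup) (a : S) : star (Dop a) = Dop a /\ Dop a ** Dop a = Dop a.
Proof. unfold Dop. split. apply mp3. rewrite mulA, mp1. reflexivity. Qed.

Lemma R_proj (S : StarRegSemigroup) (a : S) : star (Rop a) = Rop a /\ Rop a ** Rop a = Rop a.
Proof. unfold Rop. split. apply mp4. rewrite mulA, mp2. reflexivity. Qed.

Lemma inP_iff (S : StarRegSemigroup) (p : S) : inP p <-> (star p = p /\ p ** p = p).
Proof.
  split.
  - intros [b ->]. apply D_proj.
  - intros [H1 H2]. exists p. unfold Dop. now rewrite mp_proj.
Qed.

Lemma le_of (S : StarRegSemigroup) (p q : S) : star p = p -> star q = q ->
  p ** q = p -> leP p q.
Proof.
  intros Hp Hq H. split; [now symmetry|].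
  transitivity (star (p ** q)). { now rewrite H, Hp. } now rewrite starM, Hp, Hq.
Qed.

Lemma DpA (S : StarRegSemigroup) (x p : S) : down (Dop x) p -> Dop (p ** x) = p.
Proof.
  intros [Hp [Hl Hr]]. apply inP_iff in Hp. destruct Hp as [Hs Hpp].
  assert (E1 : p ** Dop (p ** x) = Dop (p ** x)).
  { unfold Dop. rewrite !mulA, Hpp. reflexivity. }
  assert (E2 : Dop (p ** x) ** p = Dop (p ** x)).
  { destruct (D_proj S (p ** x)) as [Hd _].
    transitivity (star (p ** Dop (p ** x))). { now rewrite starM, Hd, Hs. } now rewrite E1, Hd. }
  assert (E3 : p = Dop (p ** x) ** p).
  { transitivity (p ** x ** mp x). { rewrite <- mulA. exact Hl. }
    transitivity (Dop (p ** x) ** (p ** x) ** mp x). { unfold Dop. now rewrite mp1. }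
    rewrite <- !mulA. f_equal. symmetry; exact Hl. }
  rewrite E2 in E3. symmetry. exact E3.
Qed.

Lemma theta_into (S : StarRegSemigroup) (x p : S) :
  down (Dop x) p -> down (Rop x) (theta x p).
Proof.
  intros H. unfold theta. split.
  - apply inP_iff, R_proj.
  - apply le_of; try apply R_proj.
    unfold Rop. destruct H as [_ [Hl _]]. rewrite <- !mulA.
    rewrite (mulA _ x (mp x) x), (mulA _ p (x ** mp x) x).
    change (x ** mp x) with (Dop x). rewrite <- Hl. reflexivity.
Qed.

Lemma theta_inv (S : StarRegSemigroup) (x p : S) :
  down (Dop x) p -> theta (mp x) (theta x p) = p.
Proof.
  intros H. pose proof (DpA S x p H) as HA.
  destruct H as [_ [Hl _]]. unfold theta.
  assert (E : Rop (p ** x) ** mp x = mp (p ** x)).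
  { unfold Rop. rewrite <- !mulA.
    change (p ** (x ** mp x)) with (p ** Dop x). rewrite <- Hl.
    rewrite <- HA at 2. unfold Dop. rewrite mulA. apply mp2. }
  rewrite E. unfold Rop. rewrite mpK. exact HA.
Qed.

Lemma theta_inv' (S : StarRegSemigroup) (x q : S) :
  down (Rop x) q -> theta x (theta (mp x) q) = q.
Proof.
  intros H. rewrite <- (mpK S x) at 1. apply theta_inv. now rewrite D_mp.
Qed.

Lemma theta_into' (S : StarRegSemigroup) (x q : S) :
  down (Rop x) q -> down (Dop x) (theta (mp x) q).
Proof.
  intros H. rewrite <- R_mp. apply theta_into. now rewrite D_mp.
Qed.

Lemma theta_bij (S : StarRegSemigroup) (x : S) :
  bij_on (down (Dop x)) (down (Rop x)) (theta x).
Proof.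
  split; [|split].
  - apply theta_into.
  - intros p1 p2 H1 H2 E. rewrite <- (theta_inv S x p1 H1), <- (theta_inv S x p2 H2), E.
    reflexivity.
  - intros y Hy. exists (theta (mp x) y). split. now apply theta_into'. now apply theta_inv'.
Qed.

Lemma theta_mapinv (S : StarRegSemigroup) (x : S) :
  map_inv (down (Dop x)) (down (Rop x)) (theta x)
          (down (Dop (mp x))) (down (Rop (mp x))) (theta (mp x)).
Proof.
  rewrite D_mp, R_mp. split; [|split; [|split]]; try tauto.
  - apply theta_inv.
  - apply theta_inv'.
Qed.

Lemma DR (S : StarRegSemigroup) (y : S) : Dop y = Rop (star y).
Proof. now rewrite R_star. Qed.

Lemma theta'_eq (S : StarRegSemigroup) (a q : S) : inP q -> theta' a q = theta (star a) q.
Proof.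
  intros H. apply inP_iff in H. destruct H as [Hs _].
  unfold theta, theta'. rewrite DR, starM, Hs. reflexivity.
Qed.

Lemma theta_eq' (S : StarRegSemigroup) (a p : S) : inP p -> theta' (star a) p = theta a p.
Proof.
  intros H. apply inP_iff in H. destruct H as [Hs _].
  unfold theta, theta'. rewrite DR, starM, Hs, starK. reflexivity.
Qed.

Lemma down_inP (S : StarRegSemigroup) (t x : S) : down t x -> inP x.
Proof. now intros [H _]. Qed.

Theorem proposition9p12 (S : StarRegSemigroup) (a : S) :
  (* (i) *)
  bij_on (down (Dop a)) (down (Rop a)) (theta a) /\
  bij_on (down (Rop a)) (down (Dop a)) (theta' a) /\
  map_inv (down (Dop a)) (down (Rop a)) (theta a)
          (down (Dop (mp a))) (down (Rop (mp a))) (theta (mp a)) /\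
  map_inv (down (Rop a)) (down (Dop a)) (theta' a)
          (down (Rop (mp a))) (down (Dop (mp a))) (theta' (mp a)) /\
  (* (ii) *)
  map_eq (down (Dop (star a))) (down (Rop (star a))) (theta (star a))
         (down (Rop a)) (down (Dop a)) (theta' a) /\
  map_eq (down (Rop (star a))) (down (Dop (star a))) (theta' (star a))
         (down (Dop a)) (down (Rop a)) (theta a) /\
  (* (iii) *)
  (forall p, inP p -> Theta (star a) p = Delta a p) /\
  (forall p, inP p -> Delta (star a) p = Theta a p).
Proof.
  pose proof (theta_bij S (star a)) as B. rewrite D_star, R_star in B.
  pose proof (theta_into S (star a)) as I1. rewrite D_star, R_star in I1.
  pose proof (theta_into' S (star a)) as I2. rewrite D_star, R_star in I2.
  pose proof (theta_inv S (star a)) as V1. rewrite D_star in V1.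
  pose proof (theta_inv' S (star a)) as V2. rewrite R_star in V2.
  split; [apply theta_bij|].
  split.
  { destruct B as [B1 [B2 B3]]. split; [|split].
    - intros x Hx. rewrite theta'_eq by (eapply down_inP; eauto). auto.
    - intros x y Hx Hy. rewrite !theta'_eq by (eapply down_inP; eauto). auto.
    - intros y Hy. destruct (B3 y Hy) as [x [Hx E]]. exists x. split; auto.
      rewrite theta'_eq by (eapply down_inP; eauto). auto. }
  split; [apply theta_mapinv|].
  split.
  { rewrite D_mp, R_mp. split; [|split; [|split]]; try tauto.
    - intros x Hx. rewrite (theta'_eq S a x) by (eapply down_inP; eauto).
      rewrite theta'_eq by (eapply down_inP; eauto).
      rewrite <- mp_star. auto.
    - intros y Hy. rewrite (theta'_eq S (mp a) y) by (eapply down_inP; eauto).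
      rewrite <- mp_star. rewrite theta'_eq by (eapply down_inP; eauto). auto. }
  split.
  { rewrite D_star, R_star. split; [|split]; try tauto.
    intros x Hx. symmetry. apply theta'_eq. eapply down_inP; eauto. }
  split.
  { rewrite D_star, R_star. split; [|split]; try tauto.
    intros x Hx. apply theta_eq'. eapply down_inP; eauto. }
  split.
  - intros p Hp. symmetry. apply (theta'_eq S a p Hp).
  - intros p Hp. apply (theta_eq' S a p Hp).
Qed.
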